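(* Let $n\ge 5$ be odd and let $x,y$ be adjacent vertices of $Q_n$ with $f_n(x)+f_n(y)=\operatorname{str}_{f_n}(Q_n)$. If $x$ and $y$ both begin with the bit $1$, then $$\operatorname{str}_{f_n}(Q_n)\le \operatorname{str}_{f_{n-2}}(Q_{n-2})+3\cdot 2^{n-2}+\binom{n-3}{\lceil (n-3)/2\rceil}+\binom{n-2}{\lceil (n-2)/2\rceil}.$$
   Context: $Q_n$ is the $n$-dimensional hypercube: vertices are the $n$-bit strings, adjacent iff they differ in exactly one position. For a bijection $f:V(G)\to\{1,\dots,|V(G)|\}$, $\operatorname{str}_f(G)=\max\{f(u)+f(v):uv\in E(G)\}$. An $n$-bit string is $x_1\cdots x_n$, $x_i\in\{0,1\}$; its weight is its number of $1$s. Lexicographic order: $x<y$ if for some $k$, $x_j=y_j$ for $j<k$ and $x_k<y_k$. $S_n^i$ is the sequence of $n$-bit strings of weight $i$ in increasing lexicographic order; $R_n^i$ is the same set in decreasing lexicographic order. $S_n$ is the concatenation $(R_n^1,R_n^3,\dots,R_n^{n-1},S_n^n,S_n^{n-2},\dots,S_n^2,S_n^0)$ for even $n$ and $(R_n^1,R_n^3,\dots,R_n^{n-2},R_n^n,S_n^{n-1},\dots,S_n^2,S_n^0)$ for odd $n$; $f_n$ maps the string in position $j$ of $S_n$ to $j$. *)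

(* Defs.v *)
From mathcomp Require Import all_boot.
Set Implicit Arguments. Unset Strict Implicit. Unset Printing Implicit Defensive.

(* n-bit strings are represented as [seq bool] of size n (x_1 is the head). *)

Fixpoint bitstrings (n : nat) : seq (seq bool) :=
  if n is n'.+1 then
    [seq false :: s | s <- bitstrings n'] ++ [seq true :: s | s <- bitstrings n']
  else [:: [::]].

Definition weight (x : seq bool) : nat := count id x.

Definition hc_adj (x y : seq bool) : bool :=
  (size x == size y) && (count id [seq p.1 != p.2 | p <- zip x y] == 1).

Fixpoint lex_lt (x y : seq bool) : bool :=
  match x, y with
  | a :: x', b :: y' => (a < b) || ((a == b) && lex_lt x' y')
  | _, _ => false
  end.

Definition lex_le (x y : seq bool) : bool := (x == y) || lex_lt x y.

Definition Sni (n i : nat) : seq (seq bool) :=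
  sort lex_le [seq x <- bitstrings n | weight x == i].
Definition Rni (n i : nat) : seq (seq bool) := rev (Sni n i).

(* For even n this is (R^1,...,R^{n-1},S^n,...,S^0); for odd n it is
   (R^1,...,R^{n-2},R^n,S^{n-1},...,S^0). *)
Definition Sseq (n : nat) : seq (seq bool) :=
  flatten [seq Rni n i | i <- iota 0 n.+1 & odd i] ++
  flatten [seq Sni n i | i <- rev (iota 0 n.+1) & ~~ odd i].

Definition fn (n : nat) (x : seq bool) : nat := (index x (Sseq n)).+1.

Definition strength (V : seq (seq bool)) (adj : rel (seq bool))
  (f : seq bool -> nat) : nat :=
  \max_(u <- V) \max_(v <- V | adj u v) (f u + f v).

Definition str_Q (n : nat) : nat := strength (bitstrings n) hc_adj (fn n).

(* Main.v *)
Require Import Defs.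
From mathcomp Require Import all_boot ssralg ssrnum ssrint zify.
Import GRing.Theory Num.Theory.
Set Implicit Arguments. Unset Strict Implicit. Unset Printing Implicit Defensive.

Lemma lex_lt_irr x : lex_lt x x = false.
Proof. by elim: x => //= a x ->; rewrite ltnn eqxx. Qed.

Lemma lex_lt_trans x y z : lex_lt x y -> lex_lt y z -> lex_lt x z.
Proof.
elim: x y z => [|a x IH] [|b y] [|c z] //=.
by case: a; case: b; case: c => //=; apply: IH.
Qed.

Lemma lex_lt_asym x y : lex_lt x y -> ~~ lex_lt y x.
Proof.
by move=> h; apply/negP => h2; move: (lex_lt_trans h h2); rewrite lex_lt_irr.
Qed.

Lemma lex_lt_total x y : size x = size y -> x != y -> lex_lt x y || lex_lt y x.
Proof.
elim: x y => [|a x IH] [|b y] //= [] /IH {}IH.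
by case: a; case: b => //=; rewrite eqseq_cons /=.
Qed.

Lemma lex_le_trans : transitive lex_le.
Proof.
move=> y x z; rewrite /lex_le => /orP[/eqP->//|h1] /orP[/eqP<-|h2].
  by rewrite h1 orbT.
by rewrite (lex_lt_trans h1 h2) orbT.
Qed.

Lemma mem_bits N y : (y \in bitstrings N) = (size y == N).
Proof.
elim: N y => [|N IH] [|b y] //=; rewrite mem_cat.
  by apply/negP; case/orP => /mapP [? _].
apply/idP/idP.
- by case/orP => /mapP [u hu [_ ->]]; rewrite IH in hu.
- rewrite eqSS => h; case: b; apply/orP; [right|left];
  by apply/mapP; exists y => //; rewrite IH.
Qed.

Lemma uniq_bits N : uniq (bitstrings N).
Proof.
elim: N => //= N IH; rewrite cat_uniq !map_inj_uniq ?IH //=; try by move=> ?? [].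
rewrite andbT; apply/hasPn => z /mapP [u _ ->]; apply/negP => /mapP [v _] //.
Qed.

Lemma size_bits N : size (bitstrings N) = 2 ^ N.
Proof. by elim: N => //= N IH; rewrite size_cat !size_map IH expnS mul2n addnn. Qed.

Lemma count_bitsS (P : pred (seq bool)) N :
  count P (bitstrings N.+1) =
  count (fun y => P (false :: y)) (bitstrings N) + count (fun y => P (true :: y)) (bitstrings N).
Proof. by rewrite /= count_cat !count_map. Qed.

Lemma weight_cons b y : weight (b :: y) = b + weight y.
Proof. by []. Qed.

Definition befW (wy wx : nat) (a b : bool) : bool :=
  if odd wy != odd wx then odd wy
  else if odd wy then (wy < wx) || ((wy == wx) && b)
  else (wx < wy) || ((wy == wx) && a).

Definition bef (y x : seq bool) : bool :=
  befW (weight y) (weight x) (lex_lt y x) (lex_lt x y).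

Lemma bef_irr x : bef x x = false.
Proof. by rewrite /bef /befW lex_lt_irr eqxx ltnn /= !andbF; case: odd. Qed.

Lemma bef_asym y x : bef y x -> ~~ bef x y.
Proof.
rewrite /bef /befW.
have [a1 a2] := (@lex_lt_asym y x, @lex_lt_asym x y).
case: (odd (weight y)); case: (odd (weight x)) => //=;
case: ltngtP => //= h; rewrite ?h ?eqxx ?ltnn //= ; by [move/a2|move/a1].
Qed.
Lemma bef_total y x : size y = size x -> y != x -> bef y x || bef x y.
Proof.
move=> hs hne; have := lex_lt_total hs hne; rewrite /bef /befW.
case: (odd (weight y)); case: (odd (weight x)) => //=;
case: ltngtP => //= h; rewrite ?h ?eqxx ?ltnn ?orbT //=; by rewrite orbC.
Qed.

Lemma befW_S wy wx a b : befW wy.+1 wx.+1 a b = befW wx wy b a.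
Proof.
rewrite /befW /= ltnS eqSS (eq_sym wx).
by case: (odd wy); case: (odd wx).
Qed.

Lemma bef00 y x : bef (false :: y) (false :: x) = bef y x.
Proof. by []. Qed.

Lemma bef11 y x : bef (true :: y) (true :: x) = bef x y.
Proof. by rewrite /bef !weight_cons /= !add1n befW_S. Qed.

Lemma bef01 y x : bef (false :: y) (true :: x) = befW (weight y) (weight x).+1 true false.
Proof. by []. Qed.

Lemma bef10 y x : bef (true :: y) (false :: x) = befW (weight y).+1 (weight x) false true.
Proof. by []. Qed.
Lemma index_pairwise (T : eqType) (r : rel T) s x :
  (forall a, r a a = false) -> (forall a b, r a b -> ~~ r b a) ->
  pairwise r s -> x \in s -> index x s = count (r^~ x) s.
Proof.
move=> irr asy; elim: s => //= a s IH /andP[hall hpw].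
rewrite inE; case: (eqVneq a x) => [<-|ne] /= => [_|xs].
  rewrite ?eqxx irr /=; symmetry; apply/eqP; rewrite -leqn0 leqNgt -has_count.
  by apply/hasPn => y ys; apply: asy; move/allP: hall; apply.
rewrite ?(negbTE ne).
have -> : r a x by move/allP: hall; apply.
by rewrite IH.
Qed.

Lemma pairwise_rev (T : Type) (r : rel T) s :
  pairwise r (rev s) = pairwise (fun x y => r y x) s.
Proof.
elim: s => //= a s IH; rewrite rev_cons pairwise_rcons IH all_rev.
by [].
Qed.

Lemma allrel_flatr (T : Type) (r : rel T) xs yss :
  allrel r xs (flatten yss) = all (allrel r xs) yss.
Proof. by elim: yss => [|ys yss IH] /=; rewrite ?allrel0r // allrel_catr IH. Qed.

Lemma pw_flat (T : Type) (r : rel T) (F : nat -> seq T) (L : seq nat) :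
  (forall i, i \in L -> pairwise r (F i)) ->
  pairwise (fun i j => allrel r (F i) (F j)) L -> pairwise r (flatten (map F L)).
Proof.
elim: L => //= i L IH hF /andP[hall hpw].
rewrite pairwise_cat hF ?mem_head // IH ?andbT //; last first.
  by move=> j jL; apply: hF; rewrite inE jL orbT.
by rewrite allrel_flatr all_map.
Qed.

Lemma mem_flat (T : eqType) (F : nat -> seq T) L y :
  y \in flatten (map F L) -> exists2 i, i \in L & y \in F i.
Proof. by case/flattenP => s /mapP [i iL ->]; exists i. Qed.

Lemma mem_Sni n i x : (x \in Sni n i) = (size x == n) && (weight x == i).
Proof. by rewrite /Sni mem_sort mem_filter mem_bits andbC. Qed.

Lemma mem_Rni n i x : (x \in Rni n i) = (size x == n) && (weight x == i).
Proof. by rewrite /Rni mem_rev mem_Sni. Qed.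

Lemma pw_Sni n i : pairwise lex_lt (Sni n i).
Proof.
have hs : sorted lex_le (Sni n i).
  apply: (@sort_sorted_in _ (fun x : seq bool => size x == n)).
    move=> a b /eqP ha /eqP hb; rewrite /lex_le.
    case: (eqVneq a b) => [->|ne]; first by rewrite ?eqxx.
    by rewrite /=; apply: lex_lt_total => //; rewrite ha hb.
  by apply/allP => y; rewrite mem_filter mem_bits => /andP[].
rewrite sorted_pairwise in hs; last exact: lex_le_trans.
have hu : uniq (Sni n i) by rewrite sort_uniq filter_uniq // uniq_bits.
rewrite uniq_pairwise in hu.
have := conj hs hu; move/andP; rewrite -pairwise_relI.
apply: sub_pairwise => a b /andP[]; rewrite /lex_le /= => /orP[/eqP->|//]; by rewrite eqxx.
Qed.

Definition L1 n := [seq i <- iota 0 n.+1 | odd i].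
Definition L2 n := [seq i <- rev (iota 0 n.+1) | ~~ odd i].

Lemma Sseq_E n : Sseq n = flatten (map (Rni n) (L1 n)) ++ flatten (map (Sni n) (L2 n)).
Proof. by []. Qed.

Lemma pw_Sseq n : pairwise bef (Sseq n).
Proof.
rewrite Sseq_E pairwise_cat; apply/and3P; split.
- apply/allrelP => y x /mem_flat [i] + /[!mem_Rni] /andP[_ /eqP wy].
  move=> /[!mem_filter] /andP[oi _] /mem_flat [j] /[!mem_filter] /andP[oj _].
  rewrite mem_Sni => /andP[_ /eqP wx]; by rewrite /bef /befW wy wx oi (negbTE oj).
- apply: pw_flat.
    move=> i; rewrite mem_filter => /andP[oi _]; rewrite /Rni pairwise_rev.
    apply: (sub_in_pairwise (P := fun x : seq bool => weight x == i)); last exact: pw_Sni.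
      by move=> a b /eqP wa /eqP wb h; rewrite /bef /befW wa wb !eqxx oi ltnn.
    by apply/allP => a; rewrite mem_Sni => /andP[].
  have : pairwise ltn (L1 n).
    by apply: pairwise_filter; rewrite -sorted_pairwise ?iota_ltn_sorted //; exact: ltn_trans.
  apply: sub_in_pairwise => [i j|]; last by [].
  rewrite !mem_filter => /andP[oi _] /andP[oj _] lij.
  apply/allrelP => y x; rewrite !mem_Rni => /andP[_ /eqP wy] /andP[_ /eqP wx].
  by rewrite /bef wy wx /befW oi oj (lij : i < j).
- apply: pw_flat.
    move=> i; rewrite mem_filter => /andP[oi _].
    apply: (sub_in_pairwise (P := fun x : seq bool => weight x == i)); last exact: pw_Sni.
      by move=> a b /eqP wa /eqP wb h; rewrite /bef /befW wa wb !eqxx (negbTE oi) ltnn.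
    by apply/allP => a; rewrite mem_Sni => /andP[].
  have : pairwise (fun i j => j < i) (L2 n).
    apply: pairwise_filter; rewrite pairwise_rev -sorted_pairwise ?iota_ltn_sorted //.
    exact: ltn_trans.
  apply: sub_in_pairwise => [i j|]; last by [].
  rewrite !mem_filter => /andP[oi _] /andP[oj _] lij.
  apply/allrelP => y x; rewrite !mem_Sni => /andP[_ /eqP wy] /andP[_ /eqP wx].
  by rewrite /bef wy wx /befW (negbTE oi) (negbTE oj) (lij : j < i).
Qed.

Lemma mem_Sseq n x : (x \in Sseq n) = (size x == n).
Proof.
rewrite Sseq_E mem_cat; apply/idP/idP.
  by case/orP => /mem_flat [i _]; rewrite ?mem_Rni ?mem_Sni => /andP[].
move=> hx; have hw : weight x < n.+1.
  by rewrite ltnS -(eqP hx) /weight count_size.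
case ho: (odd (weight x)); apply/orP; [left|right]; apply/flattenP.
  exists (Rni n (weight x)); rewrite ?mem_Rni ?hx ?eqxx //.
  by apply/mapP; exists (weight x) => //; rewrite mem_filter mem_iota ho.
exists (Sni n (weight x)); rewrite ?mem_Sni ?hx ?eqxx //.
by apply/mapP; exists (weight x) => //; rewrite mem_filter mem_rev mem_iota ho.
Qed.

Lemma perm_Sseq n : perm_eq (Sseq n) (bitstrings n).
Proof.
apply: uniq_perm; first exact: (pairwise_uniq bef_irr (pw_Sseq n)).
  exact: uniq_bits.
by move=> x; rewrite mem_Sseq mem_bits.
Qed.

Definition Fc N x := count (bef^~ x) (bitstrings N).

Lemma fnE N x : size x = N -> fn N x = (Fc N x).+1.
Proof.
move=> hx; rewrite /fn (index_pairwise bef_irr bef_asym (pw_Sseq N)).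
  by rewrite /Fc; move/permP: (perm_Sseq N) => ->.
by rewrite mem_Sseq hx.
Qed.
Ltac par v := let h := fresh "p" in have h := modn2 v; case: (odd v) h => /= h.
Ltac cmp := repeat match goal with
 | |- context [ (?a < ?b)%N ] => let h := fresh "c" in case: (ltnP a b) => h
 | |- context [ (?a == ?b :> nat) ] => let h := fresh "e" in case: (@eqP nat a b) => h
 end.
Ltac fin := try done; exfalso; lia.

Definition cw N (p : pred nat) := count (fun y => p (weight y)) (bitstrings N).

Lemma cw_S N p : cw N.+1 p = cw N p + cw N (fun v => p v.+1).
Proof. by rewrite /cw count_bitsS. Qed.

Lemma Fc_compl N z : size z = N -> count (bef z) (bitstrings N) + Fc N z + 1 = 2 ^ N.
Proof.
move=> hz; rewrite /Fc -count_predUI.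
have -> : count (predI (bef z) (bef^~ z)) (bitstrings N) = 0.
  apply/eqP; rewrite -leqn0 leqNgt -has_count; apply/hasPn => y _ /=.
  by apply/negP => /andP[h1 h2]; move: (bef_asym h1); rewrite h2.
have -> : count (predU (bef z) (bef^~ z)) (bitstrings N) = count (predC (pred1 z)) (bitstrings N).
  apply: eq_in_count => y; rewrite mem_bits => /eqP hy /=.
  case: (eqVneq y z) => [->|ne]; first by rewrite bef_irr.
  by rewrite orbC bef_total // hy hz.
rewrite addn0 -size_bits -(count_predC (pred1 z)) addnC; congr (_ + _).
by rewrite count_uniq_mem ?uniq_bits // mem_bits hz eqxx.
Qed.

Lemma Fc0 M u : Fc M.+1 (false :: u) = Fc M u + cw M (fun v => befW v.+1 (weight u) false true).
Proof. by rewrite /Fc count_bitsS. Qed.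

Lemma cntbef1 M u :
  count (bef (true :: u)) (bitstrings M.+1) = cw M (fun v => befW (weight u).+1 v false true) + Fc M u.
Proof. by rewrite count_bitsS /cw /Fc; congr (_ + _); apply: eq_count => y; rewrite bef11. Qed.

Lemma Fc1 M u : size u = M ->
  Fc M.+1 (true :: u) + Fc M u + 1 = 2 ^ M + cw M (fun v => befW v (weight u).+1 true false).
Proof.
move=> hu; rewrite /Fc count_bitsS -/(Fc M u).
have -> : count (fun y => bef (true :: y) (true :: u)) (bitstrings M) = count (bef u) (bitstrings M).
  by apply: eq_count => y; rewrite bef11.
rewrite -(Fc_compl hu) /cw.
have -> : count (fun y => bef (false :: y) (true :: u)) (bitstrings M) =
  count (fun y => befW (weight y) (weight u).+1 true false) (bitstrings M) by [].
lia.
Qed.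

Lemma befW_01 v w : befW v.+1 w false true = ~~ befW v w.+1 true false.
Proof. rewrite /befW /=; par v; par w; cmp; fin. Qed.

Lemma R1 M u : size u = M -> Fc M.+1 (false :: u) + Fc M.+1 (true :: u) + 1 = 2 ^ M.+1.
Proof.
move=> hu; have h1 := Fc1 hu; rewrite Fc0.
have hc : cw M (fun v => befW v.+1 (weight u) false true) +
          cw M (fun v => befW v (weight u).+1 true false) = 2 ^ M.
  rewrite /cw -size_bits -(count_predC (fun y => befW (weight y) (weight u).+1 true false)) addnC.
  by congr (_ + _); apply: eq_count => y /=; rewrite befW_01.
rewrite expnS; lia.
Qed.

Definition flip (z : seq bool) := if z is c :: u then (~~ c) :: u else z.

Lemma size_flip z : size (flip z) = size z.
Proof. by case: z. Qed.

Lemma Fc_flip m z : size z = m -> 0 < m -> Fc m z + Fc m (flip z) + 1 = 2 ^ m.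
Proof.
case: m => // M; case: z => // [[] u] /= [hu] _; have := R1 hu; lia.
Qed.

Lemma befz_flip m z : size z = m -> 0 < m -> count (bef z) (bitstrings m) = Fc m (flip z).
Proof. move=> hz hm; have := Fc_flip hz hm; have := Fc_compl hz; lia. Qed.

Lemma Fc11 M z : Fc M.+2 (true :: true :: z) = Fc M z +
  (cw M.+1 (fun v => befW v (weight z).+2 true false) + cw M (fun v => befW (weight z).+1 v false true)).
Proof.
rewrite /Fc count_bitsS.
have -> : count (fun y => bef (true :: y) (true :: true :: z)) (bitstrings M.+1) =
          count (bef (true :: z)) (bitstrings M.+1) by apply: eq_count => y; rewrite bef11.
rewrite cntbef1 /Fc /cw.
have -> : count (fun y => bef (false :: y) (true :: true :: z)) (bitstrings M.+1) =
  count (fun y => befW (weight y) (weight z).+2 true false) (bitstrings M.+1) by [].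
lia.
Qed.

Lemma Fc10 M z : size z = M -> 0 < M -> Fc M.+2 (true :: false :: z) = Fc M (flip z) +
  (cw M.+1 (fun v => befW v (weight z).+1 true false) + cw M (fun v => befW (weight z) v.+1 true false)).
Proof.
move=> hz hM; rewrite /Fc count_bitsS.
have -> : count (fun y => bef (true :: y) (true :: false :: z)) (bitstrings M.+1) =
          count (bef (false :: z)) (bitstrings M.+1) by apply: eq_count => y; rewrite bef11.
rewrite [count (bef (false :: z)) _]count_bitsS.
have -> : count (fun y => bef (false :: z) (false :: y)) (bitstrings M) =
          count (bef z) (bitstrings M) by [].
rewrite (befz_flip hz hM) /Fc /cw.
have -> : count (fun y => bef (false :: y) (true :: false :: z)) (bitstrings M.+1) =
  count (fun y => befW (weight y) (weight z).+1 true false) (bitstrings M.+1) by [].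
have -> : count (fun y => bef (false :: z) (true :: y)) (bitstrings M) =
  count (fun y => befW (weight z) (weight y).+1 true false) (bitstrings M) by [].
lia.
Qed.

Definition cwz N (g : nat -> int) : int := (\sum_(y <- bitstrings N) g (weight y))%R.

Lemma cw_z N p : (Posz (cw N p)) = cwz N (fun v => (Posz (p v))).
Proof.
rewrite /cw /cwz; elim: (bitstrings N) => [|y s IH]; first by rewrite big_nil.
by rewrite big_cons /= PoszD IH.
Qed.

Lemma cwz_add N f g : cwz N (fun v => f v + g v)%R = (cwz N f + cwz N g)%R.
Proof. by rewrite /cwz big_split. Qed.

Lemma cwz_ext N f g : (forall v, f v = g v) -> cwz N f = cwz N g.
Proof. by move=> h; rewrite /cwz; apply: eq_bigr => y _; rewrite h. Qed.

Lemma cwz_S N g : cwz N.+1 g = (cwz N g + cwz N (fun v => g v.+1))%R.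
Proof. by rewrite /cwz /= big_cat !big_map. Qed.

Lemma cwz_scal N c g : cwz N (fun v => c * g v)%R = (c * cwz N g)%R.
Proof. by rewrite /cwz mulr_sumr. Qed.

Lemma cwz_const N c : cwz N (fun _ => c) = (c * (Posz (2 ^ N)))%R.
Proof.
elim: N => [|N IH]; first by rewrite /cwz /= big_cons big_nil addr0 mulr1.
by rewrite cwz_S IH expnS PoszM; nia.
Qed.

Lemma cwz_ind N j : cwz N (fun v => (Posz (v == j))) = (Posz ('C(N, j))).
Proof.
elim: N j => [|N IH] j.
  by rewrite /cwz /= big_cons big_nil addr0; case: j.
rewrite cwz_S IH; case: j => [|j].
  rewrite (@cwz_ext _ _ (fun _ => 0%R)) ?cwz_const ?mul0r ?addr0 ?bin0 //.
rewrite (@cwz_ext _ _ (fun v => (Posz (v == j)))) // IH binS PoszD addrC.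
by [].
Qed.

Definition sg (k : nat) : int := if odd k then (-1)%R else 1%R.
Definition altz (k v : nat) : int := if v <= k then sg v else 0%R.

Ltac cmp2 := repeat match goal with
 | |- context [ (?a <= ?b)%N ] => let h := fresh "c" in case: (leqP a b) => h
 | |- context [ (?a == ?b :> nat) ] => let h := fresh "e" in case: (@eqP nat a b) => h
 end.
Ltac fin2 := try done; simpl; lia.

Lemma altz_S k v : (altz k v + altz k v.+1 = sg k * (Posz (v == k)))%R.
Proof. rewrite /altz /sg /=; par v; par k; cmp2; fin2. Qed.

Lemma cwz_alt N k : cwz N.+1 (altz k) = (sg k * (Posz ('C(N, k))))%R.
Proof. by rewrite cwz_S -cwz_add (cwz_ext _ (altz_S k)) cwz_scal cwz_ind. Qed.
Lemma bin_step n j : j.*2 < n -> 'C(n, j) <= 'C(n, j.+1).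
Proof.
move=> h; have h1 := mul_bin_diag n j; have h2 := mul_bin_down n j.
rewrite -muln2 in h; nia.
Qed.

Lemma bin_le_mid n j : j <= n./2 -> 'C(n, j) <= 'C(n, n./2).
Proof.
have hh := odd_double_half n; rewrite -muln2 in hh.
move=> hj; move: {2}(n./2 - j) (erefl (n./2 - j)) => d; elim: d j hj => [|d IH] j hj hd.
  by have -> : j = n./2 by lia.
apply: leq_trans (IH j.+1 _ _); [apply: bin_step; rewrite -muln2| |]; lia.
Qed.

Lemma binmax n j : 'C(n, j) <= 'C(n, n./2).
Proof.
have hh := odd_double_half n; rewrite -muln2 in hh.
case: (leqP j n./2) => hj; first exact: bin_le_mid.
case: (leqP j n) => hjn; last by rewrite bin_small.
rewrite -bin_sub //; apply: bin_le_mid; lia.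
Qed.

Lemma binmax_even M j : ~~ odd M -> 'C(M, j) <= 'C(M, uphalf M).
Proof. by move=> h; rewrite uphalf_half (negbTE h) add0n binmax. Qed.

Lemma binmax_odd m j : odd m -> 'C(m, j) <= 'C(m, uphalf m).
Proof.
move=> h; have hh := odd_double_half m; rewrite -muln2 h /= in hh.
rewrite uphalf_half h /=.
have -> : (1 + m./2 = m - m./2)%N by lia.
rewrite bin_sub; [exact: binmax | lia].
Qed.

Definition W11 m k := cw m.+1 (fun v => befW v k.+2 true false) + cw m (fun v => befW k.+1 v false true).
Definition W10 m k := cw m.+1 (fun v => befW v k.+1 true false) + cw m (fun v => befW k v.+1 true false).
Definition g11 k v : int := (Posz (befW v k.+2 true false) + Posz (befW v.+1 k.+2 true false) + Posz (befW k.+1 v false true))%R.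
Definition g10 k v : int := (Posz (befW v k.+1 true false) + Posz (befW v.+1 k.+1 true false) + Posz (befW k v.+1 true false))%R.

Lemma W11z m k : Posz (W11 m k) = cwz m (g11 k).
Proof. by rewrite /W11 cw_S !PoszD !cw_z -!cwz_add. Qed.

Lemma W10z m k : Posz (W10 m k) = cwz m (g10 k).
Proof. by rewrite /W10 cw_S !PoszD !cw_z -!cwz_add. Qed.

Lemma P11 k v : (g11 k v + g11 k.+1 v = 3 + altz k v + sg k * Posz (v == k.+1))%R.
Proof. rewrite /g11 /altz /sg /befW /=; par v; par k; cmp2; fin2. Qed.

Lemma P00 k v : (g10 k v + g10 k.+1 v = 3 - altz k v - sg k * Posz (v == k))%R.
Proof. rewrite /g10 /altz /sg /befW /=; par v; par k; cmp2; fin2. Qed.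

Lemma P01 k v : (g10 k v + g11 k v = 3 - sg k * Posz (v == k))%R.
Proof. rewrite /g10 /g11 /altz /sg /befW /=; par v; par k; cmp2; fin2. Qed.
Lemma S11 M k : Posz (W11 M.+1 k + W11 M.+1 k.+1) =
  (3 * Posz (2 ^ M.+1) + sg k * Posz 'C(M, k) + sg k * Posz 'C(M.+1, k.+1))%R.
Proof.
rewrite PoszD !W11z -cwz_add (cwz_ext _ (P11 k)) !cwz_add cwz_const cwz_alt cwz_scal cwz_ind.
rewrite mulrC; lia.
Qed.

Lemma S00 M k : Posz (W10 M.+1 k + W10 M.+1 k.+1) =
  (3 * Posz (2 ^ M.+1) - sg k * Posz 'C(M, k) - sg k * Posz 'C(M.+1, k))%R.
Proof.
rewrite PoszD !W10z -cwz_add (cwz_ext _ (P00 k)).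
rewrite (@cwz_ext _ _ (fun v => (3 + (- 1) * altz k v + (- sg k) * Posz (v == k))%R)); last first.
  by move=> v; rewrite !mulN1r mulNr.
rewrite !cwz_add cwz_const !cwz_scal cwz_alt cwz_ind mulrC; lia.
Qed.

Lemma S01 M k : Posz (W10 M.+1 k + W11 M.+1 k) =
  (3 * Posz (2 ^ M.+1) - sg k * Posz 'C(M.+1, k))%R.
Proof.
rewrite PoszD W10z W11z -cwz_add (cwz_ext _ (P01 k)).
rewrite (@cwz_ext _ _ (fun v => (3 + (- sg k) * Posz (v == k))%R)); last first.
  by move=> v; rewrite mulNr.
rewrite !cwz_add cwz_const !cwz_scal cwz_ind mulrC; lia.
Qed.

Definition Kb M := 3 * 2 ^ M.+1 + 'C(M, uphalf M) + 'C(M.+1, uphalf M.+1).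

Lemma B11 M k : odd M.+1 -> W11 M.+1 k + W11 M.+1 k.+1 <= Kb M.
Proof.
move=> /= hm; have := S11 M k; have := @binmax_even M k hm; have := @binmax_odd M.+1 k.+1 hm.
rewrite /Kb /sg; case: (odd k); lia.
Qed.

Lemma B00 M k : odd M.+1 -> W10 M.+1 k + W10 M.+1 k.+1 <= Kb M.
Proof.
move=> /= hm; have := S00 M k; have := @binmax_even M k hm; have := @binmax_odd M.+1 k hm.
rewrite /Kb /sg; case: (odd k); lia.
Qed.

Lemma B01 M k : odd M.+1 -> W10 M.+1 k + W11 M.+1 k <= Kb M.
Proof.
move=> /= hm; have := S01 M k; have := @binmax_odd M.+1 k hm.
rewrite /Kb /sg; case: (odd k); lia.
Qed.
Definition dc (x y : seq bool) := count id [seq p.1 != p.2 | p <- zip x y].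

Lemma hc_adj_cons c d x y :
  hc_adj (c :: x) (d :: y) = (size x == size y) && ((c != d) + dc x y == 1).
Proof. by []. Qed.

Lemma dc0 x y : size x = size y -> dc x y = 0 -> x = y.
Proof.
elim: x y => [|a x IH] [|b y] //= [] /IH {}IH.
by case: a; case: b => //= /IH ->.
Qed.

Lemma dc_refl x : dc x x = 0.
Proof. by elim: x => //= a x IH; rewrite /dc /= eqxx -/(dc x x) IH. Qed.

Lemma adj_weight z w : hc_adj z w -> weight w = (weight z).+1 \/ weight z = (weight w).+1.
Proof.
elim: z w => [|c z IH] [|d w] //.
rewrite hc_adj_cons => /andP[/eqP hs]; rewrite !weight_cons.
case: c; case: d => /=.
- by rewrite add0n => h; case: (IH w); rewrite /hc_adj ?hs ?eqxx //= => ->; [left|right].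
- by rewrite add1n eqSS => /eqP /(dc0 hs) ->; right.
- by rewrite add1n eqSS => /eqP /(dc0 hs) ->; left.
- by rewrite add0n => h; case: (IH w); rewrite /hc_adj ?hs ?eqxx //= => ->; [left|right].
Qed.

Lemma adj_flip x y : hc_adj x y -> hc_adj (flip x) (flip y).
Proof.
case: x => [|c x]; case: y => [|d y] //.
by rewrite /= !hc_adj_cons; case: c; case: d.
Qed.

Lemma adj_flip_self z : 0 < size z -> hc_adj z (flip z).
Proof. by case: z => // c u _; rewrite /= hc_adj_cons eqxx dc_refl; case: c. Qed.

Lemma str_ge m z w : size z = m -> size w = m -> hc_adj z w -> fn m z + fn m w <= str_Q m.
Proof.
move=> hz hw hadj; rewrite /str_Q /strength.
have hz' : z \in bitstrings m by rewrite mem_bits hz.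
have hw' : w \in bitstrings m by rewrite mem_bits hw.
have h1 := @leq_bigmax_seq _ (bitstrings m) (hc_adj z) (fun v => fn m z + fn m v) w hw' hadj.
have h2 := @leq_bigmax_seq _ (bitstrings m) xpredT
   (fun u => \max_(v <- bitstrings m | hc_adj u v) (fn m u + fn m v)) z hz' isT.
exact: leq_trans h1 h2.
Qed.

Theorem theorem2p5 (n : nat) (x y : seq bool) :
  5 <= n -> odd n ->
  size x = n -> size y = n -> hc_adj x y ->
  fn n x + fn n y = str_Q n ->
  head false x = true -> head false y = true ->
  str_Q n <= str_Q (n - 2) + 3 * 2 ^ (n - 2)
             + 'C(n - 3, uphalf (n - 3)) + 'C(n - 2, uphalf (n - 2)).
Proof.
move=> h5 hodd hx hy hadj hstr hxh hyh.
have [M hM] : exists M, n = M.+3 by exists (n - 3); lia.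
rewrite hM in hodd hx hy hstr; rewrite hM; clear hM h5.
have -> : M.+3 - 2 = M.+1 by lia.
have -> : M.+3 - 3 = M by lia.
move: hx hy hadj hstr hxh hyh.
case: x => [|x0 [|a z]] //; case: y => [|y0 [|b w]] //= [hz] [hw] hadj hstr hx0 hy0.
subst x0 y0; rewrite -hstr.
have hm : 0 < M.+1 by [].
rewrite !fnE //=; try by rewrite ?hz ?hw.
rewrite hc_adj_cons in hadj.
have hzw : size z = size w by rewrite hz hw.
have : (a != b) + dc z w == 1 by case/andP: hadj.
clear hadj hstr.
have {}hodd : odd M.+1 by move: hodd => /=; rewrite negbK.
case: a; case: b => /=.
- rewrite add0n => hd.
  have hadj : hc_adj z w by rewrite /hc_adj hzw eqxx.
  rewrite !Fc11.
  have := str_ge hz hw hadj; rewrite !fnE //.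
  case: (adj_weight hadj) => ->.
    have := @B11 M (weight z) hodd; rewrite /Kb /W11 /W10 /=; lia.
  have := @B11 M (weight w) hodd; rewrite /Kb /W11 /W10 /=; lia.
- rewrite add1n eqSS => /eqP /(dc0 hzw) <-.
  rewrite Fc11 (Fc10 hz hm).
  have := str_ge hz (etrans (size_flip z) hz) (adj_flip_self (ltac:(by rewrite hz) : 0 < size z)).
  rewrite !fnE ?size_flip //.
  have := @B01 M (weight z) hodd; rewrite /Kb /W11 /W10 /=; lia.
- rewrite add1n eqSS => /eqP /(dc0 hzw) <-.
  rewrite Fc11 (Fc10 hz hm).
  have := str_ge hz (etrans (size_flip z) hz) (adj_flip_self (ltac:(by rewrite hz) : 0 < size z)).
  rewrite !fnE ?size_flip //.
  have := @B01 M (weight z) hodd; rewrite /Kb /W11 /W10 /=; lia.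
- rewrite add0n => hd.
  have hadj : hc_adj z w by rewrite /hc_adj hzw eqxx.
  rewrite (Fc10 hz hm) (Fc10 hw hm).
  have := str_ge (etrans (size_flip z) hz) (etrans (size_flip w) hw) (adj_flip hadj).
  rewrite !fnE ?size_flip //.
  case: (adj_weight hadj) => ->.
    have := @B00 M (weight z) hodd; rewrite /Kb /W11 /W10 /=; lia.
  have := @B00 M (weight w) hodd; rewrite /Kb /W11 /W10 /=; lia.
Qed.
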